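(* Let $(\mathbf{x}_i,y_i)_{i=1}^n\subset\mathbb{R}^d\times\{\pm1\}$, $\mathbf{z}_i:=y_i\mathbf{x}_i$, $\bar{\mathbf{z}}:=\frac1n\sum_i\mathbf{z}_i$, and suppose there are $r>0$ and $0<q<1$ with $\frac1n|\{i:\mathbf{z}_i^\top\bar{\mathbf{z}}<-r\}|\ge q$. Let $L(\mathbf{w})=\frac1n\sum_i\ln(1+\exp(-\mathbf{z}_i^\top\mathbf{w}))$ and let $\mathbf{w}_1=\mathbf{w}_0-\eta\nabla L(\mathbf{w}_0)$ with $\mathbf{w}_0=0$, $\eta>0$. If $L(\mathbf{w}_1)\le L(\mathbf{w}_0)$, then $\eta\le\frac{2\ln2}{rq}$. *)

(* Defs.v *)
From HB Require Import structures.
From mathcomp Require Import all_boot all_order all_algebra.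
From mathcomp Require Import all_classical all_reals all_analysis.
Set Implicit Arguments. Unset Strict Implicit. Unset Printing Implicit Defensive.
Import Order.TTheory GRing.Theory Num.Theory.
Import numFieldNormedType.Exports.
Local Open Scope ring_scope.

Definition dotv {R : realType} {d : nat} (u v : 'rV[R]_d) : R :=
  \sum_(k < d) u 0 k * v 0 k.

Definition grad {R : realType} {d : nat} (f : 'rV[R]_d -> R) (w : 'rV[R]_d)
  : 'rV[R]_d :=
  \row_(j < d) ('D_(delta_mx 0 j) f w).

Definition logloss {R : realType} {d n : nat} (z : 'I_n -> 'rV[R]_d)
  (w : 'rV[R]_d) : R :=
  n%:R^-1 * \sum_(i < n) ln (1 + expR (- dotv (z i) w)).

(* Main.v *)
Require Import Defs.
From HB Require Import structures.
From mathcomp Require Import all_boot all_order all_algebra.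
From mathcomp Require Import all_classical all_reals all_analysis.
From mathcomp Require Import ring lra.
Import Order.TTheory GRing.Theory Num.Theory.
Import numFieldNormedType.Exports.
Local Open Scope ring_scope.
Section S.
Variable R : realType.
Lemma isd_eq (f g : R -> R) (df dg : R) x v : is_derive x v f df -> f = g -> df = dg -> is_derive x v g dg.
Proof. by move=> H <- <-. Qed.
Lemma der_term (c : R) : is_derive (0:R) 1 (fun t : R => ln (1 + expR (- (t * c)))) (- c / 2).
Proof.
have h1 : is_derive (0:R) 1 (fun t:R => - (t * c)) (-c).
  apply: isd_eq (is_deriveN (is_deriveM (is_derive_id (0:R) (1:R)) (is_derive_cst c (0:R) (1:R)))) _ _.
    by apply/funext => t.
  by rewrite /= scaler0 add0r; congr (- _); apply: mulr1.
have h2 : is_derive (0:R) 1 (fun t:R => 1 + expR (- (t * c))) (-c).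
  apply: isd_eq (is_deriveD (is_derive_cst (1:R) (0:R) (1:R)) (is_derive1_comp (is_derive_expR _) h1)) _ _.
    by apply/funext => t.
  by rewrite /= add0r mul0r oppr0 expR0 mul1r.
have hp : 0 < 1 + expR (- ((0:R) * c)) by rewrite mul0r oppr0 expR0.
have h3 := (@is_derive1_comp R (@ln R) (fun t:R => 1 + expR (- (t * c))) 0 _ _ (is_derive1_ln hp) h2).
apply: isd_eq h3 _ _; first by apply/funext => t.
by rewrite mul0r oppr0 expR0 mulrC.
Qed.
Lemma dir0 d (f : 'rV[R]_d -> R) (v : 'rV[R]_d) :
  'D_v f 0 = 'D_1 (fun t : R => f (t *: v)) 0.
Proof.
rewrite /derive; f_equal; f_equal; apply/funext => h /=.
rewrite !addr0 scale0r; congr (_ *: (f (_ *: v) - _)); exact: (esym (mulr1 h)).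
Qed.
Lemma dotvZ d (u v : 'rV[R]_d) t : dotv u (t *: v) = t * dotv u v.
Proof. rewrite /dotv mulr_sumr; apply: eq_bigr => k _; rewrite mxE; ring. Qed.
Lemma dotv_delta d (u : 'rV[R]_d) j : dotv u (delta_mx 0 j) = u 0 j.
Proof.
rewrite /dotv (bigD1 j) //= mxE !eqxx mulr1 big1 ?addr0 // => k hk.
by rewrite mxE (negbTE hk) andbF mulr0.
Qed.
Lemma dotv0 d (u : 'rV[R]_d) : dotv u 0 = 0.
Proof. by rewrite /dotv big1 // => k _; rewrite mxE mulr0. Qed.

Lemma ln1pexp_ge (a : R) : a <= ln (1 + expR a).
Proof.
rewrite -{1}(expRK a) ler_ln ?posrE ?expR_gt0 ?addr_gt0 ?expR_gt0 //.
by rewrite lerDr.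
Qed.
Lemma ln1pexp_ge0 (a : R) : 0 <= ln (1 + expR a).
Proof. by apply: ln_ge0; rewrite lerDl ltW // expR_gt0. Qed.

Lemma grad_logloss0 d n (z : 'I_n -> 'rV[R]_d) :
  grad (logloss z) 0 = - (2^-1) *: (n%:R^-1 *: \sum_(i < n) z i).
Proof.
apply/rowP => j; rewrite !mxE dir0.
have hd : is_derive (0:R) 1 (fun t : R => logloss z (t *: delta_mx 0 j))
   (n%:R^-1 * \sum_(i < n) (- (z i 0 j) / 2)).
  apply: isd_eq (is_deriveZ n%:R^-1 (is_derive_sum (fun i => der_term (z i 0 j)))) _ _ => //.
  apply/funext => t; rewrite /logloss /= fct_sumE; congr (_ * _).
  by apply: eq_bigr => i _; rewrite dotvZ dotv_delta.
rewrite (@derive_val _ _ _ _ _ _ _ hd) summxE.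
under eq_bigr do rewrite mulNr.
rewrite sumrN -mulr_suml.
ring.
Qed.
End S.

Theorem mainTheorem15 (R : realType) (d n : nat)
  (x : 'I_n -> 'rV[R]_d) (y : 'I_n -> R)
  (hy : forall i, y i = 1 \/ y i = -1)
  (r q eta : R) (hr : 0 < r) (hq0 : 0 < q) (hq1 : q < 1) (heta : 0 < eta) :
  let z := fun i => y i *: x i in
  let zbar := n%:R^-1 *: \sum_(i < n) z i in
  q <= n%:R^-1 * (#|[set i : 'I_n | dotv (z i) zbar < - r]|)%:R ->
  let w0 : 'rV[R]_d := 0 in
  let w1 := w0 - eta *: grad (logloss z) w0 in
  logloss z w1 <= logloss z w0 ->
  eta <= 2 * ln 2 / (r * q).
Proof.
move=> z zbar hcard w0 w1 hL.
set S := [set i : 'I_n | dotv (z i) zbar < - r] in hcard.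
have hw1 : w1 = (eta / 2) *: zbar.
  rewrite /w1 /w0 grad_logloss0 -/zbar sub0r scalerA mulrN scaleNr opprK.
  by rewrite mulrC.
have hn : (0 < n)%N.
  case: (posnP n) => // n0; have e0 : n%:R = 0 :> R by rewrite n0. move: hcard; rewrite e0 invr0 mul0r => hc.
  by have := lt_le_trans hq0 hc; rewrite ltxx.
have hn0 : (0:R) < n%:R by rewrite ltr0n.
have hL0 : logloss z w0 = ln 2.
  rewrite /logloss /w0; under eq_bigr do rewrite dotv0 oppr0 expR0.
  rewrite sumr_const card_ord -[ln _ *+ n]mulr_natr mulrCA mulVf ?mulr1 //.
  by rewrite gt_eqF.
set c := eta * r / 2.
have hlow : c * (n%:R^-1 * #|S|%:R) <= logloss z w1.
  rewrite /logloss hw1 mulrCA; rewrite ler_pM2l ?invr_gt0 //.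
  rewrite mulr_natr -sumr_const big_mkcond /=. apply: ler_sum => i _.
  case: ifP => hi; last exact: ln1pexp_ge0.
  have := @ln1pexp_ge R (- dotv (z i) ((eta/2) *: zbar)).
  move: hi; rewrite inE dotvZ => hi.
  have : eta / 2 * dotv (z i) zbar <= eta / 2 * (- r).
    by rewrite ler_pM2l ?divr_gt0 // ltW.
  rewrite /c; move=> h1 h2; lra.
have hrq : 0 < r * q by rewrite mulr_gt0.
rewrite ler_pdivlMr //.
have : c * q <= ln 2.
  apply: le_trans (le_trans hlow (le_trans hL _)); last by rewrite hL0.
  by rewrite ler_pM2l // /c !mulr_gt0 // invr_gt0.
rewrite /c => h.
have -> : eta * (r * q) = 2 * (eta * r / 2 * q) by field.
by rewrite ler_pM2l.
Qed.
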